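(* For every measurable space $X$ define $\lambda_X:\mathbb DFX\to F\mathbb DX$ by $$\lambda_X=\big\langle g\circ\mathbb D\pi^{1}_X,\ g\circ\mathbb D\pi^{*}_X,\ a\mapsto\mathbb D\pi^a_X\big\rangle,$$ where $g:\mathbb D\mathbb I\to\mathbb I$, $g(m)=\int_{\mathbb I}\mathrm{id}_{\mathbb I}\,dm$. Then each $\lambda_X$ is measurable, and for every measurable $f:X\to Y$: $\lambda_Y\circ\mathbb DFf=F\mathbb Df\circ\lambda_X$; $\lambda_X\circ\eta_{FX}=F\eta_X$; and $F\mu_X\circ\lambda_{\mathbb DX}\circ\mathbb D\lambda_X=\lambda_X\circ\mu_{FX}$. Consequently $\lambda:\mathbb DF\Rightarrow F\mathbb D$ is a distributive law of the monad $\mathbb D$ over the functor $F$.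
   Context: Work in $\mathbf{Meas}$. $\mathbb I=[0,1]$ with its Borel $\sigma$-algebra; $A$ a finite alphabet. For a measurable space $(X,\Sigma_X)$, $\mathbb DX$ is the set of sub-probability measures on $X$ with the $\sigma$-algebra generated by the maps $e^X_S(m)=m(S)$, $S\in\Sigma_X$; $\mathbb Df(m)=m\circ f^{-1}$; the sub-Giry monad $(\mathbb D,\eta,\mu)$ has $\eta_X(x)(S)=\mathbf 1_S(x)$ and $\mu_X(\Phi)(S)=\int_{\mathbb DX}e^X_S\,d\Phi$. The functor $F$ is $FX=\mathbb I\times\mathbb I\times X^A$ with the product $\sigma$-algebra and $Ff=\mathrm{id}_{\mathbb I}\times\mathrm{id}_{\mathbb I}\times f^A$. We write $\mathrm{id}_{FX}=\langle\pi^1_X,\pi^*_X,a\mapsto\pi^a_X\rangle$, i.e. $\pi^1_X,\pi^*_X:FX\to\mathbb I$ are the first two projections and $\pi^a_X:FX\to X$ is the projection onto the $a$-component. A distributive law is a natural transformation $\lambda:\mathbb DF\Rightarrow F\mathbb D$ with $\lambda_X\circ\eta_{FX}=F\eta_X$ and $\lambda_X\circ\mu_{FX}=F\mu_X\circ\lambda_{\mathbb DX}\circ\mathbb D\lambda_X$. *)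

(* Defs.v *)
From HB Require Import structures.
From mathcomp Require Import all_boot all_order all_algebra.
From mathcomp Require Import all_classical all_reals all_analysis.
From mathcomp Require Export giry.

Set Implicit Arguments.
Unset Strict Implicit.
Unset Printing Implicit Defensive.

Import Order.TTheory GRing.Theory Num.Theory.
Local Open Scope classical_set_scope.
Local Open Scope ring_scope.

Section unit_interval.
Variable R : realType.

Definition I01 : Type := {x : R | (0 <= x <= 1)%R}.

HB.instance Definition _ := Choice.on I01.

Lemma I01_0_subproof : (0 <= (0:R) <= 1)%R.
Proof. by rewrite lexx ler01. Qed.

Definition I01_0 : I01 := exist _ 0 I01_0_subproof.

HB.instance Definition _ := isPointed.Build I01 I01_0.

Definition I01_measurable : set (set I01) :=
  preimage_set_system [set: I01] (@proj1_sig R _) measurable.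

Let I01_sigma : sigma_algebra [set: I01] I01_measurable.
Proof. exact/sigma_algebra_preimage/sigma_algebra_measurable. Qed.

Let I01_measurable0 : I01_measurable set0.
Proof. by case: I01_sigma. Qed.

Let I01_measurableC (U : set I01) : I01_measurable U -> I01_measurable (~` U).
Proof. by case: I01_sigma => _ hC _ /hC; rewrite setTD. Qed.

Let I01_measurableU (F : (set I01)^nat) :
  (forall i, I01_measurable (F i)) -> I01_measurable (\bigcup_i F i).
Proof. by case: I01_sigma => _ _ hU /hU. Qed.

Definition I01_display : measure_display. Proof. by constructor. Qed.

HB.instance Definition _ := @isMeasurable.Build I01_display I01 I01_measurable
  I01_measurable0 I01_measurableC I01_measurableU.

End unit_interval.

Section expo.
Variables (A : finType) (d : measure_display) (X : measurableType d).

Definition expo : Type := {ffun A -> X}.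

HB.instance Definition _ := Choice.on expo.
HB.instance Definition _ := isPointed.Build expo [ffun=> point].

Definition expo_measurable : set (set expo) :=
  <<s \bigcup_(a in [set: A]) preimage_set_system [set: expo] (fun h : expo => h a)
      measurable >>.

Let expo_measurable0 : expo_measurable set0.
Proof. exact: sigma_algebra0. Qed.

Let expo_measurableC (U : set expo) : expo_measurable U -> expo_measurable (~` U).
Proof. exact: sigma_algebraC. Qed.

Let expo_measurableU (F : (set expo)^nat) :
  (forall i, expo_measurable (F i)) -> expo_measurable (\bigcup_i F i).
Proof. exact: sigma_algebra_bigcup. Qed.

Definition expo_display : measure_display. Proof. by constructor. Qed.

HB.instance Definition _ := @isMeasurable.Build expo_display expo expo_measurable
  expo_measurable0 expo_measurableC expo_measurableU.

Lemma measurable_expo_proj (a : A) : measurable_fun [set: expo] (fun h : expo => h a).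
Proof.
move=> _ B mB; apply: sub_sigma_algebra; exists a => //.
by exists B.
Qed.

End expo.

Notation FF R A X := (I01 R * I01 R * expo A X)%type.

Section functorF.
Variables (R : realType) (A : finType).


Definition Fmap d1 d2 (X : measurableType d1) (Y : measurableType d2)
  (f : X -> Y) : FF R A X -> FF R A Y :=
  fun z => (z.1.1, z.1.2, [ffun a => f (z.2 a)] : expo A Y).

Lemma measurable_Fmap d1 d2 (X : measurableType d1) (Y : measurableType d2)
  (f : X -> Y) : measurable_fun [set: X] f -> measurable_fun [set: FF R A X] (Fmap f).
Proof.
move=> mf; apply: measurable_fun_pair.
  apply: measurable_fun_pair.
    exact: measurableT_comp measurable_fst measurable_fst.
  exact: measurableT_comp measurable_snd measurable_fst.
apply: (@measurability _ _ _ _ _ _ (\bigcup_(a in [set: A])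
   preimage_set_system [set: expo A Y] (fun h : expo A Y => h a) measurable) erefl).
move=> _ [C [a _ [B mB <-]] <-].
rewrite !setTI -comp_preimage.
have -> : (fun h : expo A Y => h a) \o (fun z : FF R A X => [ffun a0 => f (z.2 a0)] : expo A Y)
  = f \o (fun h : expo A X => h a) \o snd by apply/funext => z /=; rewrite ffunE.
rewrite -[X in measurable X]setTI.
have mh : measurable_fun [set: FF R A X] (f \o (fun h : expo A X => h a) \o snd).
  exact: (measurableT_comp (measurableT_comp mf (measurable_expo_proj a)) measurable_snd).
exact: mh.
Qed.

Definition pi1 d (X : measurableType d) (z : FF R A X) : I01 R := z.1.1.
Definition piS d (X : measurableType d) (z : FF R A X) : I01 R := z.1.2.
Definition pia d (X : measurableType d) (a : A) (z : FF R A X) : X := z.2 a.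

Lemma measurable_pi1 d (X : measurableType d) : measurable_fun [set: FF R A X] (@pi1 _ X).
Proof. exact: measurableT_comp measurable_fst measurable_fst. Qed.

Lemma measurable_piS d (X : measurableType d) : measurable_fun [set: FF R A X] (@piS _ X).
Proof. exact: measurableT_comp measurable_snd measurable_fst. Qed.

Lemma measurable_pia d (X : measurableType d) (a : A) :
  measurable_fun [set: FF R A X] (@pia _ X a).
Proof. exact: measurableT_comp (measurable_expo_proj a) measurable_snd. Qed.

(* g : D I -> I, g(m) = \int_I id dm.  The value always lies in [0,1]
   (m is a sub-probability measure), so the default of insubd is never used. *)
Definition gmean (m : giry (I01 R) R) : I01 R :=
  insubd (I01_0 R) (fine (\int[m]_x ((proj1_sig x)%:E))%E).

Definition lam d (X : measurableType d) (m : giry (FF R A X) R) : FF R A (giry X R) :=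
  (gmean (giry_map (@measurable_pi1 _ X) m),
   gmean (giry_map (@measurable_piS _ X) m),
   [ffun a => giry_map (@measurable_pia _ X a) m] : expo A (giry X R)).

Definition eqFD d (X : measurableType d) (z1 z2 : FF R A (giry X R)) : Prop :=
  z1.1 = z2.1 /\ forall a : A, z1.2 a ≡μ z2.2 a.

End functorF.

(* Main.v *)
Require Import Defs.
From HB Require Import structures.
From mathcomp Require Import all_boot all_order all_algebra.
From mathcomp Require Import all_classical all_reals all_analysis.
From mathcomp Require Import giry measurable_realfun.
Import Order.TTheory GRing.Theory Num.Theory.
Local Open Scope classical_set_scope.

Section Aux.
Variables (R : realType) (A : finType).
Local Open Scope ereal_scope.

Lemma measurable_val01 : measurable_fun [set: I01 R] (@proj1_sig R _).
Proof. by move=> _ B mB; exists B. Qed.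

Lemma measurable_toI01 d (T : measurableType d) (f : T -> I01 R) :
  measurable_fun [set: T] ((@proj1_sig R _) \o f) -> measurable_fun [set: T] f.
Proof.
move=> mf _ Y [B mB <-]; rewrite setTI.
have := mf measurableT B mB; rewrite setTI.
by [].
Qed.

Definition hI (x : I01 R) : \bar R := ((proj1_sig x)%:E)%E.

Lemma measurable_hI : measurable_fun [set: I01 R] hI.
Proof. by apply/measurable_EFinP; exact: measurable_val01. Qed.

Lemma hI_ge0 x : (0 <= hI x)%E.
Proof. by rewrite /hI lee_fin; case: x => /= r /andP[]. Qed.

Lemma hI_le1 x : (hI x <= 1)%E.
Proof. by rewrite /hI lee_fin; case: x => /= r /andP[]. Qed.

Lemma gmean_val (m : giry (I01 R) R) :
  (((proj1_sig (gmean m))%:E) = \int[m]_x hI x)%E.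
Proof.
have h0 : (0 <= \int[m]_x hI x)%E by apply: integral_ge0 => x _; exact: hI_ge0.
have h1 : (\int[m]_x hI x <= 1)%E.
  apply: (@le_trans _ _ (\int[m]_x (cst 1%E x))).
    apply: ge0_le_integral => //.
    - by move=> x _; exact: hI_ge0.
    - exact: measurable_hI.
    - by move=> x _; exact: hI_le1.
  by rewrite integral_cst //= mul1e sprobability_setT.
have fin : (\int[m]_x hI x) \is a fin_num by rewrite ge0_fin_numE// (le_lt_trans h1)// ltey.
rewrite /gmean val_insubd.
rewrite -/(hI _).
have -> : (0 <= fine (\int[m]_x hI x) <= 1)%R.
  by apply/andP; split; rewrite -lee_fin fineK.
by rewrite fineK.
Qed.

End Aux.

Section Part1.
Variables (R : realType) (A : finType).
Local Open Scope ereal_scope.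

Lemma measurable_gmean : measurable_fun [set: giry (I01 R) R] (@gmean R).
Proof.
apply: measurable_toI01.
have -> : (@proj1_sig R _) \o (@gmean R) = fine \o (giry_int ^~ (@hI R)).
  by apply/funext => m /=; rewrite /giry_int -gmean_val.
apply: measurableT_comp; first exact: fine_measurable.
exact: measurable_giry_int (@measurable_hI R) (@hI_ge0 R).
Qed.

Lemma measurable_lam d (X : measurableType d) :
  measurable_fun [set: giry (FF R A X) R] (@lam R A d X).
Proof.
apply: measurable_fun_pair.
  apply: measurable_fun_pair.
    exact: measurableT_comp measurable_gmean (measurable_giry_map _).
  exact: measurableT_comp measurable_gmean (measurable_giry_map _).
apply: (@measurability _ _ _ _ _ _ (\bigcup_(a in [set: A])
   preimage_set_system [set: expo A (giry X R)] (fun h : expo A (giry X R) => h a) measurable) erefl).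
move=> _ [C [a _ [B mB <-]] <-].
rewrite !setTI -comp_preimage.
have -> : (fun h : expo A (giry X R) => h a) \o
    (fun m : giry (FF R A X) R => [ffun a => giry_map (@measurable_pia R A _ X a) m] : expo A (giry X R))
  = giry_map (@measurable_pia R A _ X a) by apply/funext => z /=; rewrite ffunE.
rewrite -[X in measurable X]setTI.
exact: (measurable_giry_map (@measurable_pia R A _ X a)).
Qed.

End Part1.

Section Part2.
Variables (R : realType) (A : finType).
Local Open Scope ereal_scope.

Lemma gmean_eq (m1 m2 : giry (I01 R) R) :
  giry_int m1 (@hI R) = giry_int m2 (@hI R) -> gmean m1 = gmean m2.
Proof. by move=> h; rewrite /gmean; exact: (congr1 (fun v => insubd _ (fine v)) h). Qed.

Lemma mhpi1 d (X : measurableType d) : measurable_fun [set: FF R A X] (@hI R \o @pi1 R A d X).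
Proof. exact: measurableT_comp (@measurable_hI R) (@measurable_pi1 R A d X). Qed.
Lemma mhpiS d (X : measurableType d) : measurable_fun [set: FF R A X] (@hI R \o @piS R A d X).
Proof. exact: measurableT_comp (@measurable_hI R) (@measurable_piS R A d X). Qed.

Lemma natural d1 d2 (X : measurableType d1) (Y : measurableType d2)
          (f : X -> Y) (mf : measurable_fun [set: X] f) (m : giry (FF R A X) R) :
      eqFD (lam (giry_map (@measurable_Fmap R A _ _ _ _ _ mf) m))
           (@Fmap R A _ _ _ _ (giry_map mf) (lam m)).
Proof.
split.
  by rewrite /=; congr pair; apply: gmean_eq.
move=> a S mS; rewrite /= !ffunE.
change (m (@Fmap R A _ _ X Y f @^-1` (@pia R A _ Y a @^-1` S)) =
        m (@pia R A _ X a @^-1` (f @^-1` S))).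
congr (m _); apply/funext => z; rewrite /preimage /pia /Fmap /= ffunE //.
Qed.

End Part2.

Section Part3.
Variables (R : realType) (A : finType).
Local Open Scope ereal_scope.

Lemma unitlaw d (X : measurableType d) (t : FF R A X) :
      eqFD (lam (giry_ret t : giry (FF R A X) R)) (@Fmap R A _ _ _ _ giry_ret t).
Proof.
split.
  rewrite /=; congr pair.
    apply/val_inj; apply/EFin_inj; rewrite gmean_val.
    rewrite -/(giry_int _ (@hI R)) giry_int_map; [|exact: measurable_hI|exact: hI_ge0].
    by rewrite giry_int_ret //; exact: mhpi1.
  apply/val_inj; apply/EFin_inj; rewrite gmean_val.
  rewrite -/(giry_int _ (@hI R)) giry_int_map; [|exact: measurable_hI|exact: hI_ge0].
  by rewrite giry_int_ret //; exact: mhpiS.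
move=> a S mS; rewrite /= !ffunE.
by [].
Qed.

Lemma joinlaw d (X : measurableType d)
          (mlam : measurable_fun [set: giry (FF R A X) R] (@lam R A d X))
          (M : giry (giry (FF R A X) R) R) :
      eqFD (@Fmap R A _ _ _ _ giry_join (lam (giry_map mlam M)))
           (lam (giry_join M)).
Proof.
split.
  rewrite /=; congr pair.
    apply gmean_eq.
    rewrite [LHS]giry_int_map; [|exact: measurable_hI|exact: hI_ge0].
    rewrite [LHS]giry_int_map; [|exact: (@mhpi1 R A _ (giry X R))|by move=> ?; exact: hI_ge0].
    rewrite [RHS]giry_int_map; [|exact: measurable_hI|exact: hI_ge0].
    rewrite [RHS]giry_int_join; [|exact: mhpi1|by move=> ?; exact: hI_ge0].
    apply: eq_integral => m _ /=.
    rewrite [X in X = _]/hI gmean_val.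
    rewrite -[LHS]/(giry_int _ (@hI R)) giry_int_map//; [exact: measurable_hI|exact: hI_ge0].
  apply gmean_eq.
  rewrite [LHS]giry_int_map; [|exact: measurable_hI|exact: hI_ge0].
  rewrite [LHS]giry_int_map; [|exact: (@mhpiS R A _ (giry X R))|by move=> ?; exact: hI_ge0].
  rewrite [RHS]giry_int_map; [|exact: measurable_hI|exact: hI_ge0].
  rewrite [RHS]giry_int_join; [|exact: mhpiS|by move=> ?; exact: hI_ge0].
  apply: eq_integral => m _ /=.
  rewrite [X in X = _]/hI gmean_val.
  rewrite -[LHS]/(giry_int _ (@hI R)) giry_int_map//; [exact: measurable_hI|exact: hI_ge0].
move=> a S mS; rewrite /= !ffunE.
have mS' : measurable_fun [set: giry X R] (giry_ev ^~ S) by exact: measurable_giry_ev.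
change (giry_int (giry_map (@measurable_pia R A _ (giry X R) a) (giry_map mlam M)) (giry_ev ^~ S)
  = giry_int M (giry_ev ^~ (@pia R A _ X a @^-1` S))).
rewrite giry_int_map//.
rewrite giry_int_map//; last first.
  exact: measurableT_comp mS' (@measurable_pia R A _ (giry X R) a).
apply: eq_integral => m _ /=.
by rewrite /pia /lam /= ffunE.
Qed.

End Part3.

Theorem mainTheorem6 (R : realType) (A : finType) :
  (* each lambda_X is measurable *)
  (forall (d : measure_display) (X : measurableType d),
      measurable_fun [set: giry (FF R A X) R] (@lam R A d X)) /\
  (* naturality: lambda_Y o D F f = F D f o lambda_X *)
  (forall (d1 d2 : measure_display) (X : measurableType d1) (Y : measurableType d2)
          (f : X -> Y) (mf : measurable_fun [set: X] f) (m : giry (FF R A X) R),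
      eqFD (lam (giry_map (@measurable_Fmap R A _ _ _ _ _ mf) m))
           (@Fmap R A _ _ _ _ (giry_map mf) (lam m))) /\
  (* unit law: lambda_X o eta_{FX} = F eta_X *)
  (forall (d : measure_display) (X : measurableType d) (t : FF R A X),
      eqFD (lam (giry_ret t : giry (FF R A X) R)) (@Fmap R A _ _ _ _ giry_ret t)) /\
  (* multiplication law: F mu_X o lambda_{DX} o D lambda_X = lambda_X o mu_{FX} *)
  (forall (d : measure_display) (X : measurableType d)
          (mlam : measurable_fun [set: giry (FF R A X) R] (@lam R A d X))
          (M : giry (giry (FF R A X) R) R),
      eqFD (@Fmap R A _ _ _ _ giry_join (lam (giry_map mlam M)))
           (lam (giry_join M))).
Proof.
split; first exact: measurable_lam.
split; first exact: natural.
split; first exact: unitlaw.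
exact: joinlaw.
Qed.
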